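(* Let $S(x)=\frac12\Big(1+\frac{\sinh(2x)}{2x}-2\Big(\frac{\sinh x}{x}\Big)^2-\frac{2x^4}{45}\Big)$. Then for all $0<x\le\frac32$, $$S(x)\le\frac{x^6}{270}.$$ *)

(* Defs.v *)
From Stdlib Require Import Reals.
Open Scope R_scope.

Definition S (x : R) : R :=
  / 2 * (1 + sinh (2 * x) / (2 * x) - 2 * (sinh x / x) ^ 2 - 2 * x ^ 4 / 45).

(* Main.v *)
Require Import Defs.
From Stdlib Require Import Reals Lra Lia Factorial.
Open Scope R_scope.

Definition A (y : R) (n : nat) : R := sum_f_R0 (fun i => / INR (fact i) * y ^ i) n.
Definition F (y : R) (n : nat) : R := y / 8 * (A y n - A (- y) n) - / 2 * (A y n + A (- y) n).

Lemma exp_cv y : Un_cv (A y) (exp y).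
Proof. unfold exp; destruct (exist_exp y) as [l H]; simpl. exact H. Qed.

Lemma cst_cv c : Un_cv (fun _ => c) c.
Proof. intros eps He; exists 0%nat; intros; unfold Rdist; rewrite Rminus_diag, Rabs_R0; lra. Qed.

Lemma F_cv y : Un_cv (F y) (y / 8 * (exp y - exp (- y)) - / 2 * (exp y + exp (- y))).
Proof.
  unfold F. apply CV_minus; apply (CV_mult (fun _ => _)); try apply cst_cv.
  - apply CV_minus; apply exp_cv.
  - apply CV_plus; apply exp_cv.
Qed.

Lemma shift_cv (U : nat -> R) (l : R) (k : nat) : Un_cv U l -> Un_cv (fun n => U (Nat.add k n)) l.
Proof. intros H eps He; destruct (H eps He) as [N HN]; exists N; intros n Hn; apply HN; lia. Qed.

Definition w (y : R) (k : nat) : R := y ^ Datatypes.S k / INR (fact k).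

Lemma w_ge0 y k : 0 <= y -> 0 <= w y k.
Proof. intros; unfold w. apply Rmult_le_pos. apply pow_le; auto. left; apply Rinv_0_lt_compat, INR_fact_lt_0. Qed.

Lemma F_step y m : 0 <= y -> F y (Datatypes.S m) <= F y m + w y (Datatypes.S m) / 4.
Proof.
  intros Hy. unfold F, A, w. cbn [sum_f_R0].
  set (c := / INR (fact (Datatypes.S m))).
  set (Am := sum_f_R0 (fun i : nat => / INR (fact i) * y ^ i) m).
  set (Bm := sum_f_R0 (fun i : nat => / INR (fact i) * (-y) ^ i) m).
  assert (Hc : 0 < c) by (apply Rinv_0_lt_compat, INR_fact_lt_0).
  assert (Hab : Rabs ((-y) ^ Datatypes.S m) = y ^ Datatypes.S m) by (rewrite <- RPow_abs, Rabs_Ropp, Rabs_pos_eq; auto).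
  set (u := y ^ Datatypes.S m). set (v := (-y) ^ Datatypes.S m).
  assert (Hv : - u <= v). { pose proof (Rle_abs (- v)) as H0; rewrite Rabs_Ropp in H0. fold u v in Hab. lra. }
  change (y ^ Datatypes.S (Datatypes.S m)) with (y * u).
  assert (0 <= c * ((y/8 + /2) * (u + v))) by (apply Rmult_le_pos; [lra| apply Rmult_le_pos; lra]).
  unfold Rdiv. fold c. nra.
Qed.

Fixpoint rf (n : nat) : R := match n with O => 1 | Datatypes.S m => INR n * rf m end.
Lemma factR n : INR (fact n) = rf n.
Proof. induction n; simpl rf. reflexivity. rewrite fact_simpl, mult_INR, IHn. reflexivity. Qed.

Lemma F13 y : F y 13 = - 1 + y^2/4 - y^2/2 + y^4/24 - y^4/24 + y^6/480 - y^6/720 + y^8/20160 - y^8/40320 + y^10/1451520 - y^10/3628800 + y^12/159667200 - y^12/479001600 + y^14/24908083200.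
Proof.
  unfold F, A. cbn [sum_f_R0]. rewrite !factR. cbn [rf]. rewrite !INR_IZR_INZ. cbn [Z.of_nat Pos.of_succ_nat Pos.succ].
  field.
Qed.

Lemma w14 y : w y 14 = y ^ 15 / 87178291200.
Proof. unfold w. rewrite factR. cbn [rf]. rewrite !INR_IZR_INZ. cbn [Z.of_nat Pos.of_succ_nat Pos.succ]. field. Qed.

Lemma w_ratio y k : 0 <= y <= 3 -> (14 <= k)%nat -> w y (Datatypes.S k) <= w y k / 2.
Proof.
  intros Hy Hk. unfold w. rewrite fact_simpl, mult_INR.
  set (p := y ^ Datatypes.S k). change (y ^ Datatypes.S (Datatypes.S k)) with (y * p).
  assert (Hq : 0 < INR (fact k)) by apply INR_fact_lt_0.
  set (q := INR (fact k)) in *. set (r := INR (Datatypes.S k)).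
  assert (Hr : 15 <= r). { unfold r. replace 15 with (INR 15) by (simpl; ring). apply le_INR; lia. }
  assert (Hp : 0 <= p / q) by (unfold Rdiv; apply Rmult_le_pos; [apply pow_le; lra | left; apply Rinv_0_lt_compat; lra]).
  replace (y * p / (r * q)) with ((y / r) * (p / q)) by (field; lra).
  assert (y / r <= / 2).
  { assert (0 < / r) by (apply Rinv_0_lt_compat; lra).
    assert (/ r <= / 15) by (apply Rinv_le_contravar; lra).
    unfold Rdiv. nra. }
  nra.
Qed.

Lemma invariant y n : 0 <= y <= 3 -> F y (14 + n) + w y (14 + n) / 4 <= F y 13 + w y 14 / 2.
Proof.
  intros Hy. induction n.
  - rewrite Nat.add_0_r. pose proof (F_step y 13 (proj1 Hy)). lra.
  - replace (14 + Datatypes.S n)%nat with (Datatypes.S (14 + n)) by lia.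
    pose proof (F_step y (14 + n) (proj1 Hy)).
    pose proof (w_ratio y (14 + n) Hy ltac:(lia)). lra.
Qed.

Lemma fbound y : 0 <= y <= 3 ->
  y / 8 * (exp y - exp (- y)) - / 2 * (exp y + exp (- y)) <= F y 13 + w y 14 / 2.
Proof.
  intros Hy.
  apply Rle_cv_lim with (fun n => F y (14 + n)) (fun _ => F y 13 + w y 14 / 2).
  - intro n. pose proof (invariant y n Hy). pose proof (w_ge0 y (14 + n) (proj1 Hy)). lra.
  - apply shift_cv, F_cv.
  - apply cst_cv.
Qed.

Lemma polyneg y : 0 <= y <= 3 ->
  -1/241920 + y^2/2419200 + y^4/239500800 + y^6/24908083200 + y^7/174356582400 <= 0.
Proof.
  intros Hy.
  assert (y^2 <= 3^2) by (apply pow_incr; lra).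
  assert (y^4 <= 3^4) by (apply pow_incr; lra).
  assert (y^6 <= 3^6) by (apply pow_incr; lra).
  assert (y^7 <= 3^7) by (apply pow_incr; lra).
  simpl (3^2) in *. simpl (3^4) in *. simpl (3^6) in *. simpl (3^7) in *. lra.
Qed.

Lemma mainy y : 0 <= y <= 3 ->
  y / 8 * (exp y - exp (- y)) - / 2 * (exp y + exp (- y)) + 1 + y^2/4 - y^6/1440 - y^8/34560 <= 0.
Proof.
  intros Hy. pose proof (fbound y Hy). rewrite F13, w14 in H.
  pose proof (polyneg y Hy).
  assert (0 <= y^8) by (apply pow_le; lra).
  assert (y^8 * (-1/241920 + y^2/2419200 + y^4/239500800 + y^6/24908083200 + y^7/174356582400) <= 0) by nra.
  assert (E : - 1 + y^2/4 - y^2/2 + y^4/24 - y^4/24 + y^6/480 - y^6/720 + y^8/20160 - y^8/40320 + y^10/1451520 - y^10/3628800 + y^12/159667200 - y^12/479001600 + y^14/24908083200 + y ^ 15 / 87178291200 / 2 + 1 + y^2/4 - y^6/1440 - y^8/34560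
     = y^8 * (-1/241920 + y^2/2419200 + y^4/239500800 + y^6/24908083200 + y^7/174356582400)) by field.
  lra.
Qed.

Theorem lemma2 : forall x : R, 0 < x -> x <= 3 / 2 -> S x <= x ^ 6 / 270.
Proof.
  intros x Hx Hx2.
  pose proof (mainy (2 * x) ltac:(lra)) as M.
  assert (Ea : exp (2 * x) = exp x * exp x) by (rewrite <- exp_plus; f_equal; ring).
  assert (Eb : exp (- (2 * x)) = / (exp x * exp x)) by (rewrite <- Ea, exp_Ropp; reflexivity).
  assert (Ec : exp (- x) = / exp x) by apply exp_Ropp.
  rewrite Ea, Eb in M.
  assert (Hp : 0 < exp x) by apply exp_pos.
  set (a := exp x) in *.
  unfold S, sinh. rewrite Ea, Eb, Ec. fold a.
  set (Mv := 2 * x / 8 * (a * a - / (a * a)) - / 2 * (a * a + / (a * a)) + 1 + (2 * x) ^ 2 / 4 -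
      (2 * x) ^ 6 / 1440 - (2 * x) ^ 8 / 34560) in *.
  assert (K : x ^ 6 / 270 - / 2 * (1 + (a * a - / (a * a)) / 2 / (2 * x) - 2 * ((a - / a) / 2 / x) ^ 2 - 2 * x ^ 4 / 45)
     = - Mv / (2 * x ^ 2)) by (unfold Mv; field; lra).
  assert (0 <= - Mv / (2 * x ^ 2)).
  { unfold Rdiv. apply Rmult_le_pos. lra. left. apply Rinv_0_lt_compat. nra. }
  lra.
Qed.
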